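(* Let $f\in\mathcal{R}$ with $f(z)=z+\sum_{n=2}^\infty a_nz^n$ and local inverse $f^{-1}(w)=w+\sum_{n\ge2}A_nw^n$, so $A_2=-a_2$, $A_3=-a_3+2a_2^2$. Then \[ -\frac{1}{\sqrt3}\le|A_3|-|A_2|\le\frac23, \] and both inequalities are sharp.
   Context: $\mathbb{D}$ is the open unit disk; $\mathcal{A}$ is the class of holomorphic $f$ on $\mathbb{D}$ with $f(0)=0$, $f'(0)=1$; $\mathcal{R}=\{f\in\mathcal{A}:\operatorname{Re} f'(z)>0\ \forall z\in\mathbb{D}\}$. *)

(* Defs.v *)
From Stdlib Require Import Reals.
From Coquelicot Require Import Coquelicot.

Open Scope R_scope.

Definition in_unit_disk (z : C) : Prop := Cmod z < 1.

Definition cderiv (f : C -> C) (z l : C) : Prop :=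
  @is_derive C_AbsRing C_NormedModule f z l.

Definition holomorphic_on_disk (f : C -> C) : Prop :=
  forall z, in_unit_disk z -> exists l, cderiv f z l.

Definition classA (f : C -> C) : Prop :=
  holomorphic_on_disk f /\ f 0%R = 0%R /\ cderiv f 0%R 1%R.

Definition classR (f : C -> C) : Prop :=
  classA f /\
  forall z l, in_unit_disk z -> cderiv f z l -> 0 < Re l.

Definition taylor_coeffs (f : C -> C) (a : nat -> C) : Prop :=
  forall z, in_unit_disk z ->
    @is_series C_AbsRing C_NormedModule (fun n => (a n * z ^ n)%C) (f z).

(* coefficients of the local inverse f^{-1}(w) = w + sum A_n w^n *)
Definition invA2 (a : nat -> C) : C := (- a 2%nat)%C.
Definition invA3 (a : nat -> C) : C := (- a 3%nat + 2 * (a 2%nat) ^ 2)%C.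

(* Main.v *)
Require Import Defs.
From Stdlib Require Import Reals Lra Lia Psatz ClassicalEpsilon.
From Coquelicot Require Import Coquelicot.
Open Scope R_scope.


Lemma C_series_norm_le (x : nat -> C) (b : nat -> R) (X : C) (B : R) :
  @is_series C_AbsRing C_NormedModule x X -> is_series b B ->
  (forall n, Cmod (x n) <= b n) -> Cmod X <= B.
Proof.
  intros HX HB Hb.
  assert (Hp : forall n, Cmod (@sum_n C_AbelianMonoid x n) <= sum_n b n).
  { induction n.
    - rewrite !sum_O. apply Hb.
    - rewrite !sum_Sn. eapply Rle_trans. apply Cmod_triangle.
      change (@plus R_AbelianMonoid (sum_n b n) (b (S n))) with (sum_n b n + b (S n)).
      specialize (Hb (S n)). lra. }
  assert (H1 : is_lim_seq (fun n => Cmod (@sum_n C_AbelianMonoid x n)) (Cmod X)).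
  { unfold is_lim_seq. eapply filterlim_comp. exact HX.
    apply (@filterlim_norm C_AbsRing C_NormedModule). }
  assert (H2 : is_lim_seq (sum_n b) B) by exact HB.
  pose proof (is_lim_seq_le _ _ _ _ Hp H1 H2). simpl in H. exact H.
Qed.

Lemma C_ex_series_le (x : nat -> C) (b : nat -> R) :
  (forall n, Cmod (x n) <= b n) -> ex_series b ->
  @ex_series C_AbsRing C_NormedModule x.
Proof.
  intros Hb Hex.
  exact (@ex_series_le C_AbsRing C_CompleteNormedModule x b Hb Hex).
Qed.

Lemma C_series_terms_small (x : nat -> C) :
  @ex_series C_AbsRing C_NormedModule x ->
  exists N, forall n, (N <= n)%nat -> Cmod (x n) < 1.
Proof.
  intros Hx.
  pose proof (@Cauchy_ex_series C_AbsRing C_CompleteNormedModule x Hx) as HC.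
  destruct (HC (mkposreal 1 Rlt_0_1)) as [N HN].
  exists N. intros n Hn. specialize (HN n n Hn Hn).
  rewrite sum_n_n in HN. exact HN.
Qed.

Lemma bounded_prefix (g : nat -> R) (N : nat) :
  exists M, forall n, (n < N)%nat -> g n <= M.
Proof.
  induction N.
  - exists 0. intros; lia.
  - destruct IHN as [M HM]. exists (Rmax M (g N)). intros n Hn.
    destruct (Nat.eq_dec n N).
    + subst. apply Rmax_r.
    + eapply Rle_trans. apply HM. lia. apply Rmax_l.
Qed.

Lemma C_series_terms_bounded (x : nat -> C) :
  @ex_series C_AbsRing C_NormedModule x ->
  exists M, 0 <= M /\ forall n, Cmod (x n) <= M.
Proof.
  intros Hx. destruct (C_series_terms_small x Hx) as [N HN].
  destruct (bounded_prefix (fun n => Cmod (x n)) N) as [M HM].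
  exists (Rmax 1 M). split. eapply Rle_trans; [|apply Rmax_l]; lra.
  intros n. destruct (Compare_dec.le_lt_dec N n).
  - eapply Rle_trans; [|apply Rmax_l]. left. auto.
  - eapply Rle_trans; [|apply Rmax_r]. auto.
Qed.


Lemma lim_inv_Sn : is_lim_seq (fun n => / INR (S n)) 0.
Proof.
  assert (H : is_lim_seq (fun n => INR (S n)) p_infty).
  { apply (is_lim_seq_incr_1 INR p_infty). apply is_lim_seq_INR. }
  pose proof (is_lim_seq_inv _ _ H) as H2. simpl in H2.
  apply H2. discriminate.
Qed.

Lemma ex_series_sq_geom (q : R) : 0 < q < 1 ->
  ex_series (fun n => INR (S n) ^ 2 * q ^ n).
Proof.
  intros Hq.
  apply ex_series_Rabs.
  apply (ex_series_DAlembert _ q). lra.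
  - intros n. apply Rmult_integral_contrapositive. split.
    apply pow_nonzero. apply not_0_INR. discriminate.
    apply pow_nonzero. lra.
  - apply is_lim_seq_ext with (fun n => (1 + / INR (S n)) * (1 + / INR (S n)) * q).
    + intros n. assert (HS : 0 < INR (S n)) by (apply lt_0_INR; lia).
      rewrite (S_INR (S n)). rewrite Rabs_pos_eq.
      * rewrite <- (tech_pow_Rmult q n). field. split. apply pow_nonzero; lra. lra.
      * apply Rle_mult_inv_pos. apply Rmult_le_pos. apply pow_le. pose proof (pos_INR (S n)). lra.
        apply pow_le; lra.
        apply Rmult_lt_0_compat; apply pow_lt; lra.
    + assert (L : is_lim_seq (fun n => (1 + / INR (S n)) * (1 + / INR (S n)) * q) (((1 + 0) * (1 + 0)) * q)).
      { apply is_lim_seq_mult'. apply is_lim_seq_mult';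
        apply is_lim_seq_plus'; try apply is_lim_seq_const; apply lim_inv_Sn.
        apply is_lim_seq_const. }
      replace (((1 + 0) * (1 + 0)) * q) with q in L by ring. exact L.
Qed.


Lemma En_identity (z h : C) (k : nat) :
  ((z+h)^(S (S k)) - z^(S (S k)) - INR (S (S k)) * h * z^(S k))%C =
  ((z+h) * ((z+h)^(S k) - z^(S k) - INR (S k) * h * z^k) + INR (S k) * (h * h) * z^k)%C.
Proof.
  rewrite (S_INR (S k)). rewrite RtoC_plus.
  rewrite !Cpow_S. ring.
Qed.

Lemma En_bound (z h : C) (rho : R) : 1/2 <= rho -> Cmod z <= rho -> Cmod (z + h) <= rho ->
  forall n, Cmod ((z+h)^n - z^n - INR n * h * z^(pred n))%C <= 2 * INR n ^ 2 * Cmod h ^ 2 * rho ^ n.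
Proof.
  intros Hr Hz Hzh n.
  assert (Hh : 0 <= Cmod h) by apply Cmod_ge_0.
  induction n as [|n IH].
  - simpl. replace ((1 - 1 - 0 * h * 1))%C with (RtoC 0) by ring. rewrite Cmod_0. lra.
  - destruct n as [|k].
    + simpl. replace ((z + h) * 1 - z * 1 - 1 * h * 1)%C with (RtoC 0) by ring.
      rewrite Cmod_0. nra.
    + rewrite En_identity. simpl pred in IH.
      eapply Rle_trans. apply Cmod_triangle.
      rewrite !Cmod_mult, Cmod_pow, !Cmod_R.
      rewrite Rabs_pos_eq by apply pos_INR.
      assert (Hp : 0 <= rho ^ k) by (apply pow_le; lra).
      assert (Hzk : Cmod z ^ k <= rho ^ k) by (apply pow_incr; split; [apply Cmod_ge_0|lra]).
      set (E := Cmod ((z + h) ^ S k - z ^ S k - INR (S k) * h * z ^ k)%C) in *.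
      assert (HE : 0 <= E) by apply Cmod_ge_0.
      assert (H1 : Cmod (z + h) * E <= rho * (2 * INR (S k) ^ 2 * Cmod h ^ 2 * rho ^ S k)).
      { apply Rmult_le_compat; auto; apply Cmod_ge_0. }
      assert (H2 : INR (S k) * (Cmod h * Cmod h) * Cmod z ^ k <= INR (S k) * (Cmod h * Cmod h) * rho ^ k).
      { apply Rmult_le_compat_l; auto. apply Rmult_le_pos. apply pos_INR. nra. }
      eapply Rle_trans. apply Rplus_le_compat; eauto.
      rewrite (S_INR (S k)). rewrite <- !tech_pow_Rmult.
      set (x := INR (S k)). assert (0 <= x) by apply pos_INR.
      set (hh := Cmod h).
      assert (0 <= hh * hh * rho ^ k) by (apply Rmult_le_pos; nra).
      assert (Hr2 : 1/4 <= rho * rho) by nra.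
      assert (F : 2 * x * x * rho * rho + x <= 2 * (x+1) * (x+1) * rho * rho) by nra.
      pose proof (Rmult_le_compat_l _ _ _ H0 F) as G.
      match goal with |- ?L <= ?R =>
        replace L with ((hh * hh * rho ^ k) * (2 * x * x * rho * rho + x)) by ring;
        replace R with ((hh * hh * rho ^ k) * (2 * (x+1) * (x+1) * rho * rho)) by ring end.
      exact G.
Qed.


Lemma abel (a : nat -> C) :
  (forall z, Cmod z < 1 -> @ex_series C_AbsRing C_NormedModule (fun n => (a n * z ^ n)%C)) ->
  forall rho, 0 <= rho < 1 -> exists M q, 0 <= M /\ 0 < q < 1 /\
    forall n, Cmod (a n) * rho ^ n <= M * q ^ n /\ Cmod (a (S n)) * rho ^ n <= 2 * M * q ^ n.
Proof.
  intros Hser rho Hrho.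
  set (r' := (1 + rho) / 2).
  assert (Hr' : 1/2 <= r' < 1) by (unfold r'; lra).
  assert (Hc : Cmod (RtoC r') < 1) by (rewrite Cmod_R, Rabs_pos_eq; lra).
  destruct (C_series_terms_bounded _ (Hser _ Hc)) as [M [HM0 HM]].
  set (q := (1 + rho / r') / 2).
  assert (Hq1 : rho / r' < 1) by (apply Rlt_div_l; unfold r'; lra).
  assert (Hq0 : 0 <= rho / r') by (apply Rle_mult_inv_pos; lra).
  exists M, q. split; [auto|]. split; [unfold q; lra|].
  assert (Hrq : rho <= r' * q).
  { unfold q. replace rho with (r' * (rho / r')) at 1 by (field; lra).
    apply Rmult_le_compat_l; lra. }
  assert (Hpow : forall n, rho ^ n <= r' ^ n * q ^ n).
  { intros n. rewrite <- Rpow_mult_distr. apply pow_incr. lra. }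
  assert (Hbd : forall n, Cmod (a n) * r' ^ n <= M).
  { intros n. specialize (HM n). rewrite Cmod_mult, Cmod_pow, Cmod_R, Rabs_pos_eq in HM by lra. exact HM. }
  assert (Hqpos : 0 <= q ^ 1) by (simpl; unfold q; lra).
  intros n. split.
  - eapply Rle_trans. apply Rmult_le_compat_l. apply Cmod_ge_0. apply Hpow.
    rewrite <- Rmult_assoc. apply Rmult_le_compat_r. apply pow_le. unfold q; lra. apply Hbd.
  - eapply Rle_trans. apply Rmult_le_compat_l. apply Cmod_ge_0. apply Hpow.
    specialize (Hbd (S n)). simpl pow in Hbd.
    assert (Hqn : 0 <= q ^ n) by (apply pow_le; unfold q; lra).
    assert (Ha : 0 <= Cmod (a (S n))) by apply Cmod_ge_0.
    assert (Hrn : 0 <= r' ^ n) by (apply pow_le; lra).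
    assert (Cmod (a (S n)) * r' ^ n <= 2 * M).
    { apply Rmult_le_reg_l with r'. lra. nra. }
    replace (Cmod (a (S n)) * (r' ^ n * q ^ n)) with ((Cmod (a (S n)) * r' ^ n) * q ^ n) by ring.
    apply Rmult_le_compat_r; auto.
Qed.


Definition dcoef (a : nat -> C) (n : nat) : C := (INR (S n) * a (S n))%C.

Lemma taylor_ex (f : C -> C) (a : nat -> C) : taylor_coeffs f a ->
  forall z, Cmod z < 1 -> @ex_series C_AbsRing C_NormedModule (fun n => (a n * z ^ n)%C).
Proof. intros H z Hz. exists (f z). apply H. exact Hz. Qed.

Lemma deriv_series (f : C -> C) (a : nat -> C) (z Dz : C) :
  taylor_coeffs f a -> Cmod z < 1 ->
  @is_series C_AbsRing C_NormedModule (fun n => (dcoef a n * z ^ n)%C) Dz ->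
  cderiv f z Dz.
Proof.
  intros Hf Hz HD.
  set (rho := (1 + Cmod z) / 2).
  assert (Hz0 : 0 <= Cmod z) by apply Cmod_ge_0.
  assert (Hrho : 1/2 <= rho < 1) by (unfold rho; lra).
  assert (Hrz : Cmod z < rho) by (unfold rho; lra).
  destruct (abel a (taylor_ex f a Hf) rho ltac:(lra)) as [M [q [HM [Hq Hb]]]].
  set (b := fun n => M * (INR (S n) ^ 2 * q ^ n)).
  assert (Hbs : is_series b (Series b)).
  { apply Series_correct. unfold b. apply (@ex_series_scal_l R_AbsRing R_NormedModule).
    apply ex_series_sq_geom; auto. }
  assert (Hb0 : forall n, 0 <= b n).
  { intros n. unfold b. apply Rmult_le_pos; auto. apply Rmult_le_pos. apply pow_le, pos_INR. apply pow_le; lra. }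
  assert (HK : 0 <= Series b).
  { pose proof (is_lim_seq_incr_compare (sum_n b) (Series b) Hbs) as Hc.
    assert (Hm : forall n, sum_n b n <= sum_n b (S n)).
    { intros n. rewrite sum_Sn. change (sum_n b n <= sum_n b n + b (S n)). pose proof (Hb0 (S n)). lra. }
    eapply Rle_trans; [|apply (Hc Hm 0%nat)]. rewrite sum_O. apply Hb0. }
  set (K := Series b) in *.
  unfold cderiv, is_derive, filterdiff. split.
  { apply is_linear_scal_l. }
  intros x Hx. apply (@is_filter_lim_locally_unique C_AbsRing (AbsRing_NormedModule C_AbsRing)) in Hx. subst x.
  intros eps.

  assert (Hd : 0 < Rmin (rho - Cmod z) (eps / (2 * K + 1))).
  { apply Rmin_pos. lra. apply Rdiv_lt_0_compat. apply cond_pos. lra. }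
  exists (mkposreal _ Hd). intros y Hy.
  change (Cmod (y - z)%C < Rmin (rho - Cmod z) (eps / (2 * K + 1))) in Hy.
  change (Cmod ((f y - f z) - (y - z) * Dz)%C <= eps * Cmod (y - z)%C).
  set (h := (y - z)%C) in *.
  assert (Hy1 : Cmod y < 1).
  { replace y with (z + h)%C by (unfold h; ring).
    eapply Rle_lt_trans. apply Cmod_triangle. pose proof (Rmin_l (rho - Cmod z) (eps / (2 * K + 1))). lra. }
  assert (Hzh : Cmod (z + h) <= rho).
  { eapply Rle_trans. apply Cmod_triangle. pose proof (Rmin_l (rho - Cmod z) (eps / (2 * K + 1))). lra. }
  set (g := fun n => (h * (INR n * a n * z ^ (pred n)))%C).
  assert (Hg : @is_series C_AbsRing C_NormedModule g (h * Dz)%C).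
  { apply (@is_series_decr_1 C_AbsRing C_NormedModule).
    match goal with |- is_series _ ?L => replace L with (h * Dz)%C end.
    2:{ unfold g. simpl. change (h * Dz = h * Dz + - (h * (0 * a 0%nat * 1)))%C. ring. }
    assert (Hext : forall n, (scal h (dcoef a n * z ^ n)%C : C) = g (S n)).
    { intros n. unfold g, dcoef. simpl pred. reflexivity. }
    exact (@is_series_ext C_AbsRing C_NormedModule _ _ _ Hext (@is_series_scal_l C_AbsRing C_NormedModule h _ _ HD)). }
  pose proof (@is_series_minus C_AbsRing C_NormedModule _ _ _ _ (Hf y Hy1) (Hf z Hz)) as H1.
  pose proof (@is_series_minus C_AbsRing C_NormedModule _ _ _ _ H1 Hg) as H2.
  assert (Hbs2 : is_series (fun n => 2 * Cmod h ^ 2 * b n) (2 * Cmod h ^ 2 * K)).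
  { apply (@is_series_scal_l R_AbsRing R_NormedModule). exact Hbs. }
  pose proof (C_series_norm_le _ _ _ _ H2 Hbs2) as Hfin.
  change (plus (plus (f y) (opp (f z))) (opp (h * Dz)%C)) with ((f y - f z) - h * Dz)%C in Hfin.
  eapply Rle_trans. apply Hfin.
  - intros n. cbv beta. change (plus (plus (a n * y ^ n)%C (opp (a n * z ^ n)%C)) (opp (g n)))
      with ((a n * y ^ n - a n * z ^ n) - g n)%C.
    unfold g. replace ((a n * y ^ n - a n * z ^ n) - h * (INR n * a n * z ^ pred n))%C
      with (a n * (y ^ n - z ^ n - INR n * h * z ^ pred n))%C
      by ring.
    rewrite Cmod_mult.
    pose proof (En_bound z h rho ltac:(lra) ltac:(lra) Hzh n) as HE.
    assert (Ezh : (z + h)%C = y) by (unfold h; ring). rewrite Ezh in HE.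
    destruct (Hb n) as [Hb1 _].
    assert (Ha : 0 <= Cmod (a n)) by apply Cmod_ge_0.
    eapply Rle_trans. apply Rmult_le_compat_l. exact Ha. exact HE.
    unfold b.
    assert (Hn : INR n ^ 2 <= INR (S n) ^ 2).
    { apply pow_incr. split. apply pos_INR. apply le_INR. lia. }
    assert (Hhh : 0 <= Cmod h ^ 2) by (apply pow_le, Cmod_ge_0).
    assert (Hqn : 0 <= q ^ n) by (apply pow_le; lra).
    assert (Hn0 : 0 <= INR n ^ 2) by (apply pow_le, pos_INR).
    replace (Cmod (a n) * (2 * INR n ^ 2 * Cmod h ^ 2 * rho ^ n))
      with (2 * Cmod h ^ 2 * (INR n ^ 2 * (Cmod (a n) * rho ^ n))) by ring.
    apply Rmult_le_compat_l. nra.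
    replace (M * (INR (S n) ^ 2 * q ^ n)) with (INR (S n) ^ 2 * (M * q ^ n)) by ring.
    apply Rmult_le_compat; auto. apply Rmult_le_pos; auto. apply pow_le; lra.
  - assert (Hh : Cmod h <= eps / (2 * K + 1)) by (pose proof (Rmin_r (rho - Cmod z) (eps / (2 * K + 1))); lra).
    assert (Hh0 : 0 <= Cmod h) by apply Cmod_ge_0.
    assert (He : 0 < eps) by apply cond_pos.
    assert (Hh2 : Cmod h * (2 * K + 1) <= eps).
    { apply (Rmult_le_compat_r (2 * K + 1)) in Hh. 2: lra.
      unfold Rdiv in Hh. rewrite Rmult_assoc, Rinv_l in Hh by lra. lra. }
    simpl pow. nra.
Qed.


Fixpoint csum (f : nat -> C) (n : nat) : C :=
  match n with O => RtoC 0 | S n => (csum f n + f n)%C end.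

Lemma csum_ext f g n : (forall k, (k < n)%nat -> f k = g k) -> csum f n = csum g n.
Proof. induction n; intros H; simpl; auto. rewrite IHn, H; auto. Qed.

Lemma csum_plus f g n : csum (fun k => f k + g k)%C n = (csum f n + csum g n)%C.
Proof. induction n; simpl. ring. rewrite IHn. ring. Qed.

Lemma csum_scal c f n : csum (fun k => c * f k)%C n = (c * csum f n)%C.
Proof. induction n; simpl. ring. rewrite IHn. ring. Qed.

Lemma csum_swap (F : nat -> nat -> C) m N :
  csum (fun k => csum (fun n => F k n) m) N = csum (fun n => csum (fun k => F k n) N) m.
Proof.
  induction N; simpl.
  - induction m; simpl; auto. rewrite <- IHm. ring.
  - rewrite IHN. rewrite <- csum_plus. reflexivity.
Qed.

Lemma csum_const c N : csum (fun _ => c) N = (INR N * c)%C.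
Proof. induction N; simpl csum. simpl. ring. rewrite IHN, S_INR, RtoC_plus. ring. Qed.

Lemma csum_geom w N : ((w - 1) * csum (fun k => w ^ k) N)%C = (w ^ N - 1)%C.
Proof. induction N; simpl csum. simpl. ring.
  rewrite Cmult_plus_distr_l, IHN. rewrite Cpow_S. ring. Qed.

Lemma sum_n_csum (x : nat -> C) M : @sum_n C_AbelianMonoid x M = csum x (S M).
Proof.
  induction M.
  - rewrite sum_O. simpl. change (x 0%nat = 0 + x 0%nat)%C. ring.
  - rewrite sum_Sn, IHM. reflexivity.
Qed.

Lemma csum_Re_lower (f : nat -> C) (B : R) N :
  (forall k, (k < N)%nat -> B <= Re (f k)) -> INR N * B <= Re (csum f N).
Proof.
  induction N; intros H; simpl csum.
  - simpl. lra.
  - rewrite re_plus, S_INR. pose proof (H N ltac:(lia)). pose proof (IHN (fun k Hk => H k ltac:(lia))). lra.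
Qed.

Definition cis (t : R) : C := (cos t, sin t).

Lemma cis_mult a b : (cis a * cis b)%C = cis (a + b).
Proof.
  unfold cis, Cmult. simpl. rewrite cos_plus, sin_plus. f_equal; ring.
Qed.

Lemma cis_pow t n : (cis t ^ n)%C = cis (INR n * t).
Proof.
  induction n.
  - simpl. unfold cis. rewrite Rmult_0_l, cos_0, sin_0. reflexivity.
  - rewrite Cpow_S, IHn, cis_mult, S_INR. f_equal. ring.
Qed.

Definition omega (N : nat) : C := cis (2 * PI / INR N).

Lemma omega_N N : (N > 0)%nat -> (omega N ^ N)%C = RtoC 1.
Proof.
  intros HN. unfold omega. rewrite cis_pow.
  replace (INR N * (2 * PI / INR N)) with (2 * PI).
  - unfold cis. rewrite cos_2PI, sin_2PI. reflexivity.
  - field. apply not_0_INR. lia.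
Qed.

Lemma omega_neq1 N m : (0 < m < N)%nat -> (omega N ^ m)%C <> RtoC 1.
Proof.
  intros Hm E. unfold omega in E. rewrite cis_pow in E. unfold cis in E.
  injection E. intros Hs Hc.
  set (t := INR m * (2 * PI / INR N)) in *.
  assert (HN : 0 < INR N) by (apply lt_0_INR; lia).
  assert (Ht0 : 0 < t).
  { unfold t. apply Rmult_lt_0_compat. apply lt_0_INR; lia.
    apply Rdiv_lt_0_compat; [pose proof PI_RGT_0; lra|lra]. }
  assert (Ht2 : t < 2 * PI).
  { unfold t. replace (INR m * (2 * PI / INR N)) with ((2 * PI) * (INR m / INR N)) by (field; lra).
    pose proof PI_RGT_0.
    assert (INR m / INR N < 1). { apply Rlt_div_l. lra. rewrite Rmult_1_l. apply lt_INR. lia. }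
    assert (0 < 2 * PI) by lra. nra. }
  destruct (Rtotal_order t PI) as [H|[H|H]].
  - pose proof (sin_gt_0 t Ht0 H). lra.
  - rewrite H, cos_PI in Hc. lra.
  - pose proof (sin_lt_0 t H Ht2). lra.
Qed.

Lemma Cmult_eq0_l (u v : C) : u <> RtoC 0 -> (u * v)%C = RtoC 0 -> v = RtoC 0.
Proof.
  intros Hu H. replace v with ((/ u) * (u * v))%C. rewrite H. ring.
  field. exact Hu.
Qed.

Lemma root_sum N m : (N > 0)%nat ->
  csum (fun k => (omega N ^ m) ^ k)%C N = if (m mod N =? 0)%nat then RtoC (INR N) else RtoC 0.
Proof.
  intros HN.
  assert (Hdm : m = (N * (m / N) + m mod N)%nat) by (apply Nat.div_mod; lia).
  assert (Hw : (omega N ^ m)%C = (omega N ^ (m mod N))%C).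
  { rewrite Hdm at 1. rewrite Cpow_add_r, Cpow_mult_r, omega_N by auto. rewrite Cpow_1_l. ring. }
  rewrite Hw.
  destruct (Nat.eqb_spec (m mod N) 0) as [E|E].
  - rewrite E. simpl. rewrite csum_ext with (g := fun _ => RtoC 1).
    rewrite csum_const. ring. intros k _. apply Cpow_1_l.
  - assert (Hmod : (m mod N < N)%nat) by (apply Nat.mod_upper_bound; lia).
    apply Cmult_eq0_l with (omega N ^ (m mod N) - 1)%C.
    + intros H. apply (omega_neq1 N (m mod N)). lia.
      apply Ceq_minus in H. exact H.
    + rewrite csum_geom. rewrite <- Cpow_mult_r, Nat.mul_comm, Cpow_mult_r, omega_N by auto.
      rewrite Cpow_1_l. ring.
Qed.


Definition Gv (N m : nat) : C := csum (fun k => (omega N ^ k) ^ m)%C N.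

Lemma Gv_val N m : (N > 0)%nat -> (0 < m < 2 * N)%nat ->
  Gv N m = if (m =? N)%nat then RtoC (INR N) else RtoC 0.
Proof.
  intros HN Hm. unfold Gv.
  rewrite csum_ext with (g := fun k => ((omega N ^ m) ^ k)%C).
  2:{ intros k _. rewrite <- !Cpow_mult_r, Nat.mul_comm. reflexivity. }
  rewrite root_sum by auto.
  destruct (Nat.eqb_spec m N) as [E|E].
  - subst. rewrite Nat.Div0.mod_same. reflexivity.
  - assert (Hmod : m mod N <> 0%nat).
    { destruct (Compare_dec.lt_dec m N).
      + rewrite Nat.mod_small by auto. lia.
      + assert (E2 : (m mod N = m - N)%nat) by (symmetry; apply Nat.mod_unique with 1%nat; lia). lia. }
    destruct (Nat.eqb_spec (m mod N) 0); [contradiction|reflexivity].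
Qed.

Lemma Cmod_cis t : Cmod (cis t) = 1.
Proof. unfold Cmod, cis. cbn [fst snd]. replace (cos t ^ 2 + sin t ^ 2) with 1. apply sqrt_1.
  rewrite <- (sin2_cos2 t). unfold Rsqr. ring. Qed.

Lemma conj_root_pow N k l : (N > 0)%nat -> (l <= N)%nat ->
  Cconj ((omega N ^ k) ^ l)%C = ((omega N ^ k) ^ (N - l))%C.
Proof.
  intros HN Hl.
  set (z := ((omega N ^ k) ^ l)%C).
  assert (Hz : Cmod z = 1).
  { unfold z, omega. rewrite Cmod_pow, Cmod_pow, Cmod_cis. rewrite !pow1. reflexivity. }
  assert (Hz0 : z <> RtoC 0). { intros E. rewrite E, Cmod_0 in Hz. lra. }
  assert (H1 : (Cconj z * z)%C = RtoC 1).
  { rewrite Cmult_comm, <- Cmod2_conj, Hz. simpl. f_equal; ring. }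
  assert (H2 : (((omega N ^ k) ^ (N - l)) * z)%C = RtoC 1).
  { unfold z. rewrite <- Cpow_add_r. replace (N - l + l)%nat with N by lia.
    rewrite <- !Cpow_mult_r, Nat.mul_comm, Cpow_mult_r, omega_N by auto. apply Cpow_1_l. }
  replace (Cconj z) with (Cconj z * z * / z)%C by (field; auto).
  rewrite H1, <- H2. field. auto.
Qed.

Lemma csum_first3 (f : nat -> C) K : (forall n, (3 <= n)%nat -> f n = RtoC 0) ->
  csum f (K + 3) = (f 0%nat + f 1%nat + f 2%nat)%C.
Proof.
  intros H. induction K.
  - simpl. ring.
  - replace (S K + 3)%nat with (S (K + 3)) by lia. simpl csum at 1. rewrite IHK, (H (K + 3)%nat) by lia. ring.
Qed.

Section Ident.
Variables (c : nat -> C) (r : R) (v0 v1 v2 : C).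

Definition Vf (z : C) : C := (v0 + v1 * z + v2 * z ^ 2)%C.
Definition Vbf (N : nat) (z : C) : C :=
  (Cconj v0 * z ^ N + Cconj v1 * z ^ (N - 1) + Cconj v2 * z ^ (N - 2))%C.
Definition Pf (M : nat) (z : C) : C := csum (fun n => c n * z ^ n)%C (S M).

Definition term9 (N n : nat) (z : C) : C :=
  (v0 * Cconj v0 * z ^ (n + 0 + N) + v0 * Cconj v1 * z ^ (n + 0 + (N - 1)) + v0 * Cconj v2 * z ^ (n + 0 + (N - 2))
 + v1 * Cconj v0 * z ^ (n + 1 + N) + v1 * Cconj v1 * z ^ (n + 1 + (N - 1)) + v1 * Cconj v2 * z ^ (n + 1 + (N - 2))
 + v2 * Cconj v0 * z ^ (n + 2 + N) + v2 * Cconj v1 * z ^ (n + 2 + (N - 1)) + v2 * Cconj v2 * z ^ (n + 2 + (N - 2)))%C.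

Lemma term9_eq N n z : (z ^ n * Vf z * Vbf N z)%C = term9 N n z.
Proof.
  unfold term9, Vf, Vbf. rewrite !Cpow_add_r. simpl (z ^ 0)%C. simpl (z ^ 1)%C. ring.
Qed.

Lemma sum_term9 N n : (N >= 3)%nat -> (n + 3 <= N)%nat ->
  csum (fun k => term9 N n (omega N ^ k)%C) N =
  (INR N * ((if (n =? 0)%nat then v0 * Cconj v0 + v1 * Cconj v1 + v2 * Cconj v2 else 0)
         + (if (n =? 1)%nat then v0 * Cconj v1 + v1 * Cconj v2 else 0)
         + (if (n =? 2)%nat then v0 * Cconj v2 else 0)))%C.
Proof.
  intros HN Hn. unfold term9.
  repeat (rewrite csum_plus). rewrite !csum_scal.
  repeat (match goal with |- context [csum (fun k => ((omega N ^ k) ^ ?m)%C) N] =>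
    change (csum (fun k => ((omega N ^ k) ^ m)%C) N) with (Gv N m) end).
  rewrite !Gv_val by lia.
  repeat match goal with |- context [ (?a =? ?b)%nat ] =>
    let H := fresh in destruct (Nat.eqb_spec a b) as [H|H]; try (exfalso; lia) end;
  ring.
Qed.

Lemma finite_identity N M : (2 <= M)%nat -> (M + 3 <= N)%nat ->
  csum (fun k => Pf M (r * (omega N ^ k)) * Vf (omega N ^ k) * Vbf N (omega N ^ k))%C N =
  (INR N * (c 0%nat * (v0 * Cconj v0 + v1 * Cconj v1 + v2 * Cconj v2)
          + c 1%nat * r * (v0 * Cconj v1 + v1 * Cconj v2)
          + c 2%nat * (r * r) * (v0 * Cconj v2)))%C.
Proof.
  intros HM HN.
  unfold Pf.
  rewrite csum_ext with (g := fun k => csum (fun n => (c n * r ^ n * term9 N n (omega N ^ k))%C) (S M)).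
  2:{ intros k _. set (z := (omega N ^ k)%C).
      transitivity (csum (fun n => (Vf z * Vbf N z) * (c n * (r * z) ^ n))%C (S M)).
      - rewrite csum_scal. ring.
      - apply csum_ext. intros n _. rewrite <- term9_eq, Cpow_mult_l. ring. }
  rewrite csum_swap.
  rewrite csum_ext with (g := fun n => (c n * r ^ n * INR N *
        ((if (n =? 0)%nat then v0 * Cconj v0 + v1 * Cconj v1 + v2 * Cconj v2 else 0)
         + (if (n =? 1)%nat then v0 * Cconj v1 + v1 * Cconj v2 else 0)
         + (if (n =? 2)%nat then v0 * Cconj v2 else 0)))%C).
  2:{ intros n Hn. rewrite csum_scal, sum_term9 by lia. ring. }
  replace (S M) with ((M - 2) + 3)%nat by lia.
  rewrite csum_first3.
  - simpl. ring.
  - intros n Hn. repeat match goal with |- context [ (?a =? ?b)%nat ] =>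
      let H := fresh in destruct (Nat.eqb_spec a b) as [H|H]; try (exfalso; lia) end.
    ring.
Qed.
End Ident.


Section Tail.
Context {K : AbsRing} {V : NormedModule K}.

Lemma sum_n_finite (x : nat -> V) M n :
  sum_n (fun k => if (k <=? M)%nat then x k else zero) n = sum_n x (Nat.min n M).
Proof.
  induction n.
  - rewrite Nat.min_0_l, !sum_O. reflexivity.
  - rewrite sum_Sn, IHn. destruct (Nat.leb_spec (S n) M).
    + rewrite !Nat.min_l by lia. rewrite sum_Sn. reflexivity.
    + rewrite !Nat.min_r by lia. apply plus_zero_r.
Qed.

Lemma is_series_finite (x : nat -> V) M :
  is_series (fun k => if (k <=? M)%nat then x k else zero) (sum_n x M).
Proof.
  unfold is_series.
  apply filterlim_ext_loc with (fun _ => sum_n x M).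
  - exists M. intros n Hn. rewrite sum_n_finite, Nat.min_r by lia. reflexivity.
  - apply filterlim_const.
Qed.

Lemma is_series_tail (x : nat -> V) L M : is_series x L ->
  is_series (fun k => if (k <=? M)%nat then zero else x k) (minus L (sum_n x M)).
Proof.
  intros H.
  pose proof (is_series_minus _ _ _ _ H (is_series_finite x M)) as H2.
  eapply is_series_ext; [|exact H2].
  intros n. simpl. destruct (n <=? M)%nat.
  - exact (@plus_opp_r (NormedModule.AbelianGroup K V) (x n)).
  - exact (@minus_zero_r (NormedModule.AbelianGroup K V) (x n)).
Qed.
End Tail.

Lemma tail_small (c : nat -> C) (r : R) : 0 <= r ->
  ex_series (fun n => Cmod (c n) * r ^ n) ->
  (forall z, Cmod z = r -> forall L, @is_series C_AbsRing C_NormedModule (fun n => (c n * z ^ n)%C) L -> 0 <= Re L) ->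
  forall eps, 0 < eps -> exists M, (2 <= M)%nat /\ forall z, Cmod z = r -> - eps <= Re (Pf c M z).
Proof.
  intros Hr [B HB] Hpos eps Heps.
  destruct (HB (ball B (mkposreal eps Heps)) (locally_ball B _)) as [N0 HN0].
  set (M := Nat.max N0 2).
  exists M. split. unfold M. lia.
  intros z Hz.
  set (b := fun n => Cmod (c n) * r ^ n).
  assert (Hterm : forall n, Cmod (c n * z ^ n)%C = b n).
  { intros n. unfold b. rewrite Cmod_mult, Cmod_pow, Hz. reflexivity. }
  destruct (C_ex_series_le (fun n => (c n * z ^ n)%C) b (fun n => Req_le _ _ (Hterm n)) (ex_intro _ B HB)) as [L HL].
  pose proof (Hpos z Hz L HL) as HL0.
  pose proof (@is_series_tail C_AbsRing C_NormedModule _ _ M HL) as HT.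
  pose proof (@is_series_tail R_AbsRing R_NormedModule _ _ M HB) as HTb.
  pose proof (C_series_norm_le _ _ _ _ HT HTb) as Hn.
  assert (Hn' : Cmod (minus L (sum_n (fun n => (c n * z ^ n)%C) M)) <= minus B (sum_n b M)).
  { apply Hn. intros n. destruct (n <=? M)%nat.
    - exact (Req_le _ _ Cmod_0).
    - rewrite Hterm. apply Rle_refl. }
  assert (HB2 : Rabs (sum_n b M - B) < eps).
  { specialize (HN0 M ltac:(unfold M; lia)). exact HN0. }
  change (minus B (sum_n b M)) with (B - sum_n b M) in Hn'.
  unfold Pf. rewrite <- sum_n_csum.
  set (S := sum_n (fun n => (c n * z ^ n)%C) M) in *.
  change (minus L S) with (L - S)%C in Hn'.
  pose proof (re_le_Cmod (L - S)%C) as Hre.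
  replace (Re S) with (Re L - Re (L - S)%C).
  2:{ unfold Cminus. rewrite re_plus, re_opp. ring. }
  apply Rabs_le_between in Hre.
  pose proof (Rabs_le_between (sum_n b M - B)). 
  assert (B - sum_n b M < eps) by (apply Rabs_def2 in HB2; lra).
  lra.
Qed.


Lemma Vb_conj v0 v1 v2 N k : (N >= 3)%nat ->
  Vbf v0 v1 v2 N (omega N ^ k)%C = Cconj (Vf v0 v1 v2 (omega N ^ k)%C).
Proof.
  intros HN. set (z := (omega N ^ k)%C).
  assert (E0 : (z ^ N)%C = RtoC 1).
  { pose proof (conj_root_pow N k 0 ltac:(lia) ltac:(lia)) as H. rewrite Nat.sub_0_r in H.
    fold z in H. rewrite <- H. unfold Cconj. apply injective_projections; simpl; ring. }
  assert (E1 : Cconj z = (z ^ (N - 1))%C).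
  { pose proof (conj_root_pow N k 1 ltac:(lia) ltac:(lia)) as H. fold z in H. rewrite Cpow_1_r in H. exact H. }
  assert (E2 : Cconj (z ^ 2)%C = (z ^ (N - 2))%C).
  { exact (conj_root_pow N k 2 ltac:(lia) ltac:(lia)). }
  unfold Vbf, Vf. rewrite !Cplus_conj, !Cmult_conj, E1, E2, E0. ring.
Qed.

Lemma Cmod_V_le v0 v1 v2 z : Cmod z = 1 -> Cmod (Vf v0 v1 v2 z) <= Cmod v0 + Cmod v1 + Cmod v2.
Proof.
  intros Hz. unfold Vf.
  eapply Rle_trans. apply Cmod_triangle.
  eapply Rle_trans. apply Rplus_le_compat_r. apply Cmod_triangle.
  rewrite !Cmod_mult, Cmod_pow, Hz. simpl. lra.
Qed.

Lemma toeplitz (c : nat -> C) (r : R) : 0 < r < 1 -> c 0%nat = RtoC 1 ->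
  ex_series (fun n => Cmod (c n) * r ^ n) ->
  (forall z, Cmod z = r -> forall L, @is_series C_AbsRing C_NormedModule (fun n => (c n * z ^ n)%C) L -> 0 <= Re L) ->
  forall v0 v1 v2 : C,
  0 <= Re (v0 * Cconj v0 + v1 * Cconj v1 + v2 * Cconj v2
          + c 1%nat * r * (v0 * Cconj v1 + v1 * Cconj v2)
          + c 2%nat * (r * r) * (v0 * Cconj v2))%C.
Proof.
  intros Hr Hc0 Hex Hpos v0 v1 v2.
  set (Z := (v0 * Cconj v0 + v1 * Cconj v1 + v2 * Cconj v2
          + c 1%nat * r * (v0 * Cconj v1 + v1 * Cconj v2)
          + c 2%nat * (r * r) * (v0 * Cconj v2))%C).
  destruct (Rle_or_lt 0 (Re Z)) as [H|H]; [exact H|exfalso].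
  set (W := Cmod v0 + Cmod v1 + Cmod v2).
  assert (HW : 0 <= W) by (unfold W; pose proof (Cmod_ge_0 v0); pose proof (Cmod_ge_0 v1); pose proof (Cmod_ge_0 v2); lra).
  set (eps := - Re Z / (2 * (W * W + 1))).
  assert (Heps : 0 < eps) by (unfold eps; apply Rdiv_lt_0_compat; nra).
  destruct (tail_small c r ltac:(lra) Hex Hpos eps Heps) as [M [HM HP]].
  set (N := (M + 3)%nat).
  pose proof (finite_identity c r v0 v1 v2 N M HM ltac:(unfold N; lia)) as Hid.
  rewrite Hc0 in Hid.
  assert (HZ : (INR N * (1 * (v0 * Cconj v0 + v1 * Cconj v1 + v2 * Cconj v2) +
         c 1%nat * r * (v0 * Cconj v1 + v1 * Cconj v2) +
         c 2%nat * (r * r) * (v0 * Cconj v2)))%C = (INR N * Z)%C) by (unfold Z; ring).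
  rewrite HZ in Hid.
  assert (Hlow : INR N * (- eps * (W * W)) <= Re (csum (fun k =>
     (Pf c M (r * (omega N ^ k)) * Vf v0 v1 v2 (omega N ^ k) * Vbf v0 v1 v2 N (omega N ^ k))%C) N)).
  { apply csum_Re_lower. intros k _.
    rewrite Vb_conj by (unfold N; lia).
    set (V := Vf v0 v1 v2 (omega N ^ k)%C).
    rewrite <- Cmult_assoc, <- Cmod2_conj, re_scal_r.
    assert (Hzk : Cmod (omega N ^ k)%C = 1) by (unfold omega; rewrite Cmod_pow, Cmod_cis, pow1; reflexivity).
    assert (Hmod : Cmod (r * (omega N ^ k))%C = r).
    { rewrite Cmod_mult, Cmod_R, Hzk, Rabs_pos_eq; lra. }
    pose proof (HP _ Hmod) as HPk.
    assert (HV : Cmod V <= W) by (apply Cmod_V_le; exact Hzk).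
    assert (HV0 : 0 <= Cmod V) by apply Cmod_ge_0.
    assert (Cmod V ^ 2 <= W * W) by (simpl; nra).
    assert (0 <= Cmod V ^ 2) by (simpl; nra).
    nra. }
  rewrite Hid, re_scal_l in Hlow.
  assert (HN : 0 < INR N) by (apply lt_0_INR; unfold N; lia).
  assert (HZ2 : - eps * (W * W) <= Re Z).
  { apply Rmult_le_reg_l with (INR N); auto. }
  assert (Hk : eps * (W * W) < - Re Z).
  { unfold eps. unfold Rdiv. 
    assert (0 < 2 * (W * W + 1)) by nra.
    apply Rmult_lt_reg_r with (2 * (W * W + 1)); auto.
    replace (- Re Z * / (2 * (W * W + 1)) * (W * W) * (2 * (W * W + 1))) with (- Re Z * (W * W)) by (field; lra).
    nra. }
  lra.
Qed.


Lemma quad_identity (p q s t r al be : R) :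
  let T1 := ((p, q) * RtoC r)%C in
  let u := (al, be) : C in
  let w := (RtoC (- / 2) * (T1 - Cconj T1 * u))%C in
  Re (RtoC 1 * Cconj (RtoC 1) + w * Cconj w + (- u) * Cconj (- u)
      + (p, q) * r * (RtoC 1 * Cconj w + w * Cconj (- u))
      + (s, t) * (r * r) * (RtoC 1 * Cconj (- u)))%C
  = 2 - r * r * (p * p + q * q) / 2
    - (al * (r * r * s - r * r * (p * p - q * q) / 2) + be * (r * r * t - r * r * p * q))
    - (1 - (al * al + be * be)) * (1 - r * r * (p * p + q * q) / 4).
Proof.
  intros. unfold T1, u, w, Cconj, Cmult, Cplus, Copp, Cminus, RtoC. simpl. field.
Qed.

Lemma limit_r (K : R) : (forall r, 0 < r < 1 -> r * r * K <= 2) -> K <= 2.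
Proof.
  intros H. destruct (Rle_or_lt K 2) as [H1|H1]; auto. exfalso.
  set (r2 := (1 + 2 / K) / 2).
  assert (Hr2 : 0 < r2 < 1).
  { unfold r2. assert (0 < 2 / K < 1). { split. apply Rdiv_lt_0_compat; lra. apply Rlt_div_l; lra. } lra. }
  set (r := sqrt r2).
  assert (Hr : 0 < r < 1).
  { unfold r. split. apply sqrt_lt_R0; lra. rewrite <- sqrt_1. apply sqrt_lt_1; lra. }
  specialize (H r Hr). unfold r in H. rewrite sqrt_sqrt in H by lra.
  unfold r2 in H. replace ((1 + 2 / K) / 2 * K) with ((K + 2) / 2) in H by (field; lra). lra.
Qed.

Lemma fs_bound (c : nat -> C) :
  (forall r, 0 < r < 1 -> forall v0 v1 v2 : C,
    0 <= Re (v0 * Cconj v0 + v1 * Cconj v1 + v2 * Cconj v2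
          + c 1%nat * r * (v0 * Cconj v1 + v1 * Cconj v2)
          + c 2%nat * (r * r) * (v0 * Cconj v2))%C) ->
  Cmod (c 2%nat - RtoC (/ 2) * (c 1%nat * c 1%nat))%C + Cmod (c 1%nat) ^ 2 / 2 <= 2.
Proof.
  intros HT.
  destruct (c 1%nat) as [p q] eqn:Ec1. destruct (c 2%nat) as [s t] eqn:Ec2.
  set (E1 := s - (p * p - q * q) / 2). set (E2 := t - p * q).
  assert (HE : Cmod ((s, t) - RtoC (/ 2) * ((p, q) * (p, q)))%C = sqrt (E1 * E1 + E2 * E2)).
  { unfold Cmod. f_equal. unfold E1, E2, Cminus, Cplus, Copp, Cmult, RtoC. simpl. field. }
  assert (Hx : Cmod (p, q) ^ 2 = p * p + q * q) by (rewrite Cmod2_alt; simpl; ring).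
  rewrite HE, Hx.
  assert (Hu : forall r, 0 < r < 1 -> forall al be, al * al + be * be = 1 ->
     r * r * (al * E1 + be * E2) <= 2 - r * r * (p * p + q * q) / 2).
  { intros r Hr al be Hab.
    pose proof (HT r Hr (RtoC 1) (RtoC (- / 2) * ((p, q) * RtoC r - Cconj ((p, q) * RtoC r) * (al, be)))%C (- (al, be))%C) as H.
    try rewrite Ec1 in H; try rewrite Ec2 in H.
    rewrite (quad_identity p q s t r al be) in H. rewrite Hab in H.
    unfold E1, E2. nra. }
  apply limit_r. intros r Hr.
  set (nE := sqrt (E1 * E1 + E2 * E2)).
  assert (HnE : 0 <= nE) by apply sqrt_pos.
  assert (Hsq : nE * nE = E1 * E1 + E2 * E2) by (apply sqrt_sqrt; nra).
  destruct (Rle_lt_or_eq_dec 0 nE HnE) as [Hp|H0].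
  - pose proof (Hu r Hr (E1 / nE) (E2 / nE)) as H.
    assert (Hab : E1 / nE * (E1 / nE) + E2 / nE * (E2 / nE) = 1).
    { replace (E1 / nE * (E1 / nE) + E2 / nE * (E2 / nE)) with ((E1 * E1 + E2 * E2) / (nE * nE)) by (field; lra).
      rewrite Hsq. field. nra. }
    specialize (H Hab).
    replace (E1 / nE * E1 + E2 / nE * E2) with nE in H.
    2:{ replace (E1 / nE * E1 + E2 / nE * E2) with ((E1 * E1 + E2 * E2) / nE) by (field; lra).
        rewrite <- Hsq. field. lra. }
    nra.
  - rewrite <- H0.
    pose proof (Hu r Hr 1 0 ltac:(ring)) as H1.
    pose proof (Hu r Hr (-1) 0 ltac:(ring)) as H2.
    nra.
Qed.


Lemma is_series_at0 (x : nat -> C) :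
  @is_series C_AbsRing C_NormedModule (fun n => (x n * RtoC 0 ^ n)%C) (x 0%nat).
Proof.
  pose proof (@is_series_finite C_AbsRing C_NormedModule x 0) as H.
  rewrite sum_O in H.
  eapply is_series_ext; [|exact H].
  intros n. destruct n.
  - simpl. rewrite Cmult_1_r. reflexivity.
  - simpl. rewrite Cmult_0_l, Cmult_0_r. reflexivity.
Qed.

Lemma dcoef_abs_series (f : C -> C) (a : nat -> C) : taylor_coeffs f a ->
  forall r, 0 <= r < 1 -> ex_series (fun n => Cmod (dcoef a n) * r ^ n).
Proof.
  intros Hf r Hr.
  destruct (abel a (taylor_ex f a Hf) r Hr) as [M [q [HM [Hq Hb]]]].
  apply (@ex_series_le R_AbsRing R_CompleteNormedModule) with (fun n => 2 * M * (INR (S n) ^ 2 * q ^ n)).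
  - intros n. change (Rabs (Cmod (dcoef a n) * r ^ n) <= 2 * M * (INR (S n) ^ 2 * q ^ n)).
    rewrite Rabs_pos_eq by (apply Rmult_le_pos; [apply Cmod_ge_0|apply pow_le; lra]).
    unfold dcoef. rewrite Cmod_mult, Cmod_R, Rabs_pos_eq by apply pos_INR.
    destruct (Hb n) as [_ H2].
    assert (H1 : 1 <= INR (S n)) by (apply (le_INR 1); lia).
    assert (Hq0 : 0 <= q ^ n) by (apply pow_le; lra).
    assert (0 <= Cmod (a (S n)) * r ^ n) by (apply Rmult_le_pos; [apply Cmod_ge_0|apply pow_le; lra]).
    replace (INR (S n) * Cmod (a (S n)) * r ^ n) with (INR (S n) * (Cmod (a (S n)) * r ^ n)) by ring.
    replace (2 * M * (INR (S n) ^ 2 * q ^ n)) with (INR (S n) ^ 2 * (2 * M * q ^ n)) by ring.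
    assert (INR (S n) <= INR (S n) ^ 2) by (replace (INR (S n) ^ 2) with (INR (S n) * INR (S n)) by ring; nra).
    apply Rmult_le_compat; lra.
  - apply (@ex_series_scal_l R_AbsRing R_NormedModule). apply ex_series_sq_geom; auto.
Qed.

Lemma coef_bound (f : C -> C) (a : nat -> C) : classR f -> taylor_coeffs f a ->
  Cmod (dcoef a 2 - RtoC (/ 2) * (dcoef a 1 * dcoef a 1))%C + Cmod (dcoef a 1) ^ 2 / 2 <= 2.
Proof.
  intros [[Hhol [Hf0 Hd0]] HR] Hf.
  assert (Hc0 : dcoef a 0 = RtoC 1).
  { assert (H0 : Cmod (RtoC 0) < 1) by (rewrite Cmod_0; lra).
    pose proof (deriv_series f a (RtoC 0) (dcoef a 0) Hf H0 (is_series_at0 (dcoef a))) as H1.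
    apply is_C_derive_unique in H1. apply is_C_derive_unique in Hd0. rewrite <- H1. exact Hd0. }
  apply fs_bound. intros r Hr.
  apply toeplitz. exact Hr. exact Hc0.
  - apply (dcoef_abs_series f a Hf). lra.
  - intros z Hz L HL. assert (Hz1 : Cmod z < 1) by lra.
    pose proof (deriv_series f a z L Hf Hz1 HL) as Hd.
    left. apply (HR z L Hz1 Hd).
Qed.

Lemma final_real (X e A3 : R) : 0 <= X -> 0 <= e -> e + 2 * X * X <= 2 ->
  A3 <= e / 3 + 4 / 3 * (X * X) -> 4 / 3 * (X * X) - e / 3 <= A3 -> 0 <= A3 ->
  - (1 / sqrt 3) <= A3 - X <= 2 / 3.
Proof.
  intros HX He H HA1 HA2 HA0.
  set (s := 1 / sqrt 3).
  assert (Hs3 : sqrt 3 * sqrt 3 = 3) by (apply sqrt_sqrt; lra).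
  assert (Hs0 : 0 < sqrt 3) by (apply sqrt_lt_R0; lra).
  assert (Hs : 0 < s) by (unfold s; apply Rdiv_lt_0_compat; lra).
  assert (Hss : s * s = 1 / 3).
  { unfold s. replace (1 / sqrt 3 * (1 / sqrt 3)) with (1 / (sqrt 3 * sqrt 3)) by (field; lra). rewrite Hs3. reflexivity. }
  split.
  - destruct (Rle_or_lt X s).
    + lra.
    + assert (H2 : 1 / 2 < s) by nra. nra.
  - nra.
Qed.

Lemma main_bounds (f : C -> C) (a : nat -> C) : classR f -> taylor_coeffs f a ->
  - (1 / sqrt 3) <= Cmod (invA3 a) - Cmod (invA2 a) <= 2 / 3.
Proof.
  intros HR Hf.
  pose proof (coef_bound f a HR Hf) as H.
  unfold dcoef in H.
  set (E := (INR (S 2) * a (S 2) - RtoC (/ 2) * (INR (S 1) * a (S 1) * (INR (S 1) * a (S 1))))%C) in H.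
  assert (Hc1 : Cmod (INR (S 1) * a (S 1))%C = 2 * Cmod (a 2%nat)).
  { rewrite Cmod_mult, Cmod_R. simpl. rewrite Rabs_pos_eq by lra. ring. }
  rewrite Hc1 in H.
  assert (HA3 : invA3 a = (RtoC (- / 3) * E + RtoC (4 / 3) * (a 2%nat * a 2%nat))%C).
  { unfold invA3, E. simpl INR. rewrite !RtoC_plus. unfold Cdiv. 
    apply injective_projections; simpl; field. }
  assert (HA2 : Cmod (invA2 a) = Cmod (a 2%nat)) by (unfold invA2; apply Cmod_opp).
  rewrite HA2.
  set (X := Cmod (a 2%nat)).
  assert (HX0 : 0 <= X) by apply Cmod_ge_0.
  assert (He0 : 0 <= Cmod E) by apply Cmod_ge_0.
  assert (Hsq : Cmod (RtoC (4 / 3) * (a 2%nat * a 2%nat))%C = 4 / 3 * (X * X)).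
  { rewrite !Cmod_mult, Cmod_R, Rabs_pos_eq by lra. reflexivity. }
  assert (HEm : Cmod (RtoC (- / 3) * E)%C = Cmod E / 3).
  { rewrite Cmod_mult, Cmod_R. rewrite Rabs_left by lra. field. }
  apply (final_real X (Cmod E)); auto.
  - unfold X. replace ((2 * Cmod (a 2%nat)) ^ 2 / 2) with (2 * Cmod (a 2%nat) * Cmod (a 2%nat)) in H by field. lra.
  - rewrite HA3. eapply Rle_trans. apply Cmod_triangle. rewrite Hsq, HEm. lra.
  - rewrite HA3. rewrite <- Hsq, <- HEm.
    pose proof (Cmod_triangle (RtoC (- / 3) * E + RtoC (4 / 3) * (a 2%nat * a 2%nat))%C (- (RtoC (- / 3) * E))%C) as Ht.
    rewrite Cmod_opp in Ht.
    replace (RtoC (- / 3) * E + RtoC (4 / 3) * (a 2%nat * a 2%nat) + - (RtoC (- / 3) * E))%C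
      with (RtoC (4 / 3) * (a 2%nat * a 2%nat))%C in Ht by ring.
    lra.
  - apply Cmod_ge_0.
Qed.


Lemma C_lim_intro (u : nat -> C) (L : C) :
  (forall eps, 0 < eps -> exists N, forall n, (N <= n)%nat -> Cmod (u n - L)%C < eps) ->
  filterlim u eventually (@locally C_UniformSpace L).
Proof.
  intros H P [eps HP].
  destruct (H eps (cond_pos eps)) as [N HN].
  exists N. intros n Hn. apply HP. apply C_NormedModule_mixin_compat1. apply HN. exact Hn.
Qed.

Lemma C_series_unique (x : nat -> C) L1 L2 :
  @is_series C_AbsRing C_NormedModule x L1 -> @is_series C_AbsRing C_NormedModule x L2 -> L1 = L2.
Proof.
  intros H1 H2.
  exact (@filterlim_locally_unique nat C_AbsRing C_NormedModule eventually _ _ _ _ H1 H2).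
Qed.

Lemma C_geom (z : C) : Cmod z < 1 ->
  @is_series C_AbsRing C_NormedModule (fun n => (z ^ n)%C) (/ (1 - z))%C.
Proof.
  intros Hz.
  assert (Hz1 : (1 - z)%C <> RtoC 0).
  { intros E. assert (z = RtoC 1). { apply Ceq_minus in E. symmetry. exact E. }
    subst. rewrite Cmod_1 in Hz. lra. }
  assert (Hps : forall n, @sum_n C_AbelianMonoid (fun k => (z ^ k)%C) n = ((1 - z ^ (S n)) / (1 - z))%C).
  { intros n. rewrite sum_n_csum.
    apply (proj2 (Ceq_minus _ _)). apply Cmult_eq0_l with (1 - z)%C; auto.
    replace ((1 - z) * (csum (fun k => (z ^ k)%C) (S n) - (1 - z ^ S n) / (1 - z)))%C
      with (- ((z - 1) * csum (fun k => (z ^ k)%C) (S n)) - (1 - z ^ S n))%C by (field; auto).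
    rewrite csum_geom. ring. }
  unfold is_series. apply C_lim_intro. intros eps Heps.
  pose proof (is_lim_seq_geom (Cmod z) ltac:(rewrite Rabs_pos_eq by apply Cmod_ge_0; lra)) as Hg.
  assert (Hc : 0 < Cmod (1 - z)%C) by (apply Cmod_gt_0; auto).
  destruct (Hg (ball 0 (mkposreal _ (Rmult_lt_0_compat _ _ Heps Hc))) (locally_ball _ _)) as [N HN].
  exists N. intros n Hn. rewrite Hps.
  replace ((1 - z ^ S n) / (1 - z) - / (1 - z))%C with (- (z ^ S n / (1 - z)))%C by (field; auto).
  rewrite Cmod_opp, Cmod_div by auto. rewrite Cmod_pow.
  specialize (HN (S n) ltac:(lia)).
  change (Rabs (Cmod z ^ S n - 0) < eps * Cmod (1 - z)%C) in HN.
  rewrite Rminus_0_r, Rabs_pos_eq in HN by (apply pow_le, Cmod_ge_0).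
  apply Rlt_div_l; auto.
Qed.

Lemma Re_inv_gt (w : C) : Cmod (1 - w)%C < 1 -> 1 / 2 < Re (/ w)%C.
Proof.
  destruct w as [x y]. intros H.
  assert (H2 : Cmod ((1 - (x, y)))%C ^ 2 < 1).
  { assert (0 <= Cmod (1 - (x, y))%C) by apply Cmod_ge_0. simpl. nra. }
  rewrite Cmod2_alt in H2. simpl in H2.
  unfold Cinv. simpl.
  assert (Hpos : 0 < x * x + y * y) by nra.
  replace (x * (x * 1) + y * (y * 1)) with (x * x + y * y) by ring.
  apply Rmult_lt_reg_r with (x * x + y * y); auto.
  replace (x / (x * x + y * y) * (x * x + y * y)) with x by (field; lra). nra.
Qed.

Section Extremal.
Variables (al be : R).
Hypotheses (Hal : 0 <= al) (Hbe : 0 <= be) (Hsum : al + be = 2).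

Definition ce (n : nat) : C := RtoC (al + be * (-1) ^ n - (if (n =? 0)%nat then 1 else 0)).
Definition ae (n : nat) : C := match n with O => RtoC 0 | S m => (RtoC (/ INR (S m)) * ce m)%C end.
Definition fe (z : C) : C :=
  epsilon (inhabits (RtoC 0)) (fun L => @is_series C_AbsRing C_NormedModule (fun n => (ae n * z ^ n)%C) L).

Lemma ce_bound n : Cmod (ce n) <= 3.
Proof.
  unfold ce. rewrite Cmod_R.
  assert (Hp : Rabs ((-1) ^ n) = 1) by (rewrite <- RPow_abs, Rabs_m1; apply pow1).
  destruct (Nat.eqb n 0); eapply Rle_trans; try apply Rabs_triang; rewrite Rabs_Ropp ||
    (unfold Rminus; eapply Rle_trans; [apply Rabs_triang|]);
    try (rewrite Rabs_Ropp);
    eapply Rle_trans; try (apply Rplus_le_compat_r; apply Rabs_triang);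
    rewrite Rabs_mult, Hp, !Rabs_pos_eq by lra; try lra.
Qed.

Lemma ae_bound n : Cmod (ae n) <= 3.
Proof.
  destruct n as [|m]; cbn [ae].
  - rewrite Cmod_0. lra.
  - rewrite Cmod_mult, Cmod_R.
    assert (H1 : 1 <= INR (S m)) by (apply (le_INR 1); lia).
    rewrite Rabs_pos_eq by (apply Rlt_le, Rinv_0_lt_compat; lra).
    assert (/ INR (S m) <= 1) by (rewrite <- Rinv_1; apply Rinv_le_contravar; lra).
    pose proof (ce_bound m). pose proof (Cmod_ge_0 (ce m)).
    assert (0 < / INR (S m)) by (apply Rinv_0_lt_compat; lra). nra.
Qed.

Lemma dcoef_ae n : dcoef ae n = ce n.
Proof.
  unfold dcoef. cbn [ae]. rewrite Cmult_assoc, <- RtoC_mult, Rinv_r.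
  - apply Cmult_1_l.
  - apply not_0_INR. discriminate.
Qed.

Lemma ex_bounded_series (x : nat -> C) (z : C) : (forall n, Cmod (x n) <= 3) -> Cmod z < 1 ->
  @ex_series C_AbsRing C_NormedModule (fun n => (x n * z ^ n)%C).
Proof.
  intros Hx Hz. apply C_ex_series_le with (fun n => 3 * Cmod z ^ n).
  - intros n. rewrite Cmod_mult, Cmod_pow. apply Rmult_le_compat_r. apply pow_le, Cmod_ge_0. apply Hx.
  - apply (@ex_series_scal_l R_AbsRing R_NormedModule). apply ex_series_geom.
    rewrite Rabs_pos_eq by apply Cmod_ge_0. exact Hz.
Qed.

Lemma fe_taylor : taylor_coeffs fe ae.
Proof.
  intros z Hz. unfold fe. apply epsilon_spec.
  apply ex_bounded_series; auto. apply ae_bound.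
Qed.

Definition Dval (z : C) : C := (RtoC al * / (1 - z) + RtoC be * / (1 - - z) - 1)%C.

Lemma D_series z : Cmod z < 1 ->
  @is_series C_AbsRing C_NormedModule (fun n => (dcoef ae n * z ^ n)%C) (Dval z).
Proof.
  intros Hz.
  assert (Hz' : Cmod (- z)%C < 1) by (rewrite Cmod_opp; auto).
  pose proof (@is_series_scal_l C_AbsRing C_NormedModule (RtoC al) _ _ (C_geom z Hz)) as H1.
  pose proof (@is_series_scal_l C_AbsRing C_NormedModule (RtoC be) _ _ (C_geom (- z)%C Hz')) as H2.
  pose proof (@is_series_finite C_AbsRing C_NormedModule (fun _ => RtoC 1) 0) as H3.
  rewrite sum_O in H3.
  pose proof (@is_series_minus C_AbsRing C_NormedModule _ _ _ _ (@is_series_plus C_AbsRing C_NormedModule _ _ _ _ H1 H2) H3) as H.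
  eapply is_series_ext; [|exact H].
  intros n. rewrite dcoef_ae. unfold ce.
  change (RtoC al * z ^ n + RtoC be * (- z) ^ n - (if (n <=? 0)%nat then RtoC 1 else RtoC 0)
     = RtoC (al + be * (-1) ^ n - (if (n =? 0)%nat then 1 else 0)) * z ^ n)%C.
  replace (- z)%C with (RtoC (-1) * z)%C by ring.
  rewrite Cpow_mult_l, <- RtoC_pow.
  destruct n; simpl.
  - rewrite !RtoC_minus, !RtoC_plus, !RtoC_mult. ring.
  - rewrite !RtoC_minus, !RtoC_plus, !RtoC_mult. ring.
Qed.

Lemma Dval_pos z : Cmod z < 1 -> 0 < Re (Dval z).
Proof.
  intros Hz. unfold Dval.
  unfold Cminus. rewrite !re_plus, re_opp, !re_scal_l.
  assert (H1 : 1 / 2 < Re (/ (1 - z))%C).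
  { apply Re_inv_gt. replace (1 - (1 - z))%C with z by ring. exact Hz. }
  assert (H2 : 1 / 2 < Re (/ (1 - - z))%C).
  { apply Re_inv_gt. replace (1 - (1 - - z))%C with (- z)%C by ring. rewrite Cmod_opp. exact Hz. }
  unfold Cminus in H1, H2. simpl (Re (RtoC 1)).
  set (R1 := Re (/ (1 + - z))%C) in *. set (R2 := Re (/ (1 + - - z))%C) in *.
  assert (P1 : 0 <= al * (R1 - 1/2)) by (apply Rmult_le_pos; lra).
  assert (P2 : 0 <= be * (R2 - 1/2)) by (apply Rmult_le_pos; lra).
  destruct (Rle_lt_dec al 0).
  - assert (be = 2) by lra. subst be. lra.
  - assert (P3 : 0 < al * (R1 - 1/2)) by (apply Rmult_lt_0_compat; lra). lra.
Qed.

Lemma fe_classR : classR fe.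
Proof.
  assert (Hdisk : forall z, Cmod z < 1 -> cderiv fe z (Dval z)).
  { intros z Hz. apply (deriv_series fe ae z (Dval z) fe_taylor Hz (D_series z Hz)). }
  split; [split; [|split]|].
  - intros z Hz. exists (Dval z). apply Hdisk. exact Hz.
  - assert (H0 : Cmod (RtoC 0) < 1) by (rewrite Cmod_0; lra).
    pose proof (fe_taylor (RtoC 0) H0) as H1.
    pose proof (is_series_at0 ae) as H2.
    exact (C_series_unique _ _ _ H1 H2).
  - assert (H0 : Cmod (RtoC 0) < 1) by (rewrite Cmod_0; lra).
    pose proof (deriv_series fe ae (RtoC 0) _ fe_taylor H0 (is_series_at0 (dcoef ae))) as H.
    rewrite dcoef_ae in H. unfold ce in H. simpl in H.
    replace (al + be * 1 - 1) with 1 in H by lra. exact H.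
  - intros z l Hz Hl.
    pose proof (Hdisk z Hz) as Hd.
    apply is_C_derive_unique in Hd. apply is_C_derive_unique in Hl.
    rewrite <- Hl, Hd. apply Dval_pos. exact Hz.
Qed.

Lemma invA2_ae : invA2 ae = RtoC (- ((al - be) / 2)).
Proof.
  unfold invA2, ae, ce. simpl. apply injective_projections; simpl; field.
Qed.

Lemma invA3_ae : invA3 ae = RtoC (- 2 / 3 + (al - be) ^ 2 / 2).
Proof.
  unfold invA3, ae, ce. simpl. replace be with (2 - al) by lra. apply injective_projections; simpl; field.
Qed.
End Extremal.

Lemma extremal (al be : R) : 0 <= al -> 0 <= be -> al + be = 2 ->
  exists (f : C -> C) (a : nat -> C), classR f /\ taylor_coeffs f a /\
    Cmod (invA3 a) - Cmod (invA2 a) = Rabs (- 2 / 3 + (al - be) ^ 2 / 2) - Rabs ((al - be) / 2).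
Proof.
  intros H1 H2 H3. exists (fe al be), (ae al be).
  split. apply fe_classR; auto. split. apply fe_taylor; auto.
  rewrite invA2_ae, invA3_ae by auto. rewrite !Cmod_R, Rabs_Ropp. reflexivity.
Qed.


Theorem mainTheorem10 :
  (forall (f : C -> C) (a : nat -> C),
      classR f -> taylor_coeffs f a ->
      - (1 / sqrt 3) <= Cmod (invA3 a) - Cmod (invA2 a) <= 2 / 3)
  /\ (exists (f : C -> C) (a : nat -> C),
        classR f /\ taylor_coeffs f a /\
        Cmod (invA3 a) - Cmod (invA2 a) = - (1 / sqrt 3))
  /\ (exists (f : C -> C) (a : nat -> C),
        classR f /\ taylor_coeffs f a /\
        Cmod (invA3 a) - Cmod (invA2 a) = 2 / 3).
Proof.
  split; [|split].
  - exact main_bounds.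
  - set (s := 1 / sqrt 3).
    assert (Hs3 : sqrt 3 * sqrt 3 = 3) by (apply sqrt_sqrt; lra).
    assert (Hs0 : 0 < sqrt 3) by (apply sqrt_lt_R0; lra).
    assert (Hs : 0 < s) by (unfold s; apply Rdiv_lt_0_compat; lra).
    assert (Hss : s * s = 1 / 3).
    { unfold s. replace (1 / sqrt 3 * (1 / sqrt 3)) with (1 / (sqrt 3 * sqrt 3)) by (field; lra). rewrite Hs3. reflexivity. }
    assert (Hs1 : s < 1) by nra.
    destruct (extremal (1 + s) (1 - s) ltac:(lra) ltac:(lra) ltac:(lra)) as [f [a [H1 [H2 H3]]]].
    exists f, a. split; auto. split; auto. rewrite H3.
    replace (- 2 / 3 + (1 + s - (1 - s)) ^ 2 / 2) with 0 by (simpl; nra).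
    replace ((1 + s - (1 - s)) / 2) with s by field.
    rewrite Rabs_R0, Rabs_pos_eq by lra. unfold s. ring.
  - destruct (extremal 1 1 ltac:(lra) ltac:(lra) ltac:(lra)) as [f [a [H1 [H2 H3]]]].
    exists f, a. split; auto. split; auto. rewrite H3.
    replace (- 2 / 3 + (1 - 1) ^ 2 / 2) with (- (2 / 3)) by (simpl; field).
    replace ((1 - 1) / 2) with 0 by field.
    rewrite Rabs_R0, Rabs_Ropp, Rabs_pos_eq by lra. ring.
Qed.
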